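(* Let $\mathbf A$ be a real $n\times n$ matrix. Then $\mathbf A$ is eventually strictly $J$-sign-symmetric (ESJS) if and only if $\mathbf A=\mathbf D\widetilde{\mathbf A}\mathbf D^{-1}$ for some nonsingular real diagonal matrix $\mathbf D$ and some eventually positive matrix $\widetilde{\mathbf A}$.
   Context: For $J\subseteq[n]=\{1,\dots,n\}$ with $J^c=[n]\setminus J$, a real matrix $\mathbf B=\{b_{ij}\}$ is strictly $J$-sign-symmetric if $b_{ij}>0$ for $(i,j)\in (J\times J)\cup(J^c\times J^c)$ and $b_{ij}<0$ for $(i,j)\in(J\times J^c)\cup(J^c\times J)$; $\mathbf B$ is called SJS if it is strictly $J$-sign-symmetric for some $J\subseteq[n]$. A real matrix $\mathbf A$ is ESJS if there is a positive integer $k_0$ such that $\mathbf A^k$ is SJS for all $k\ge k_0$. A real matrix $\widetilde{\mathbf A}$ is eventually positive if there is a positive integer $k_0$ such that $\widetilde{\mathbf A}^k$ has all entries positive for all $k\ge k_0$. *)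

(* Defs.v *)
From mathcomp Require Import all_boot all_order all_algebra.
From mathcomp Require Import reals.
Set Implicit Arguments. Unset Strict Implicit. Unset Printing Implicit Defensive.
Import Order.TTheory GRing.Theory Num.Theory.
Local Open Scope ring_scope.

Definition strictly_J_sign_symmetric (R : numDomainType) (n : nat)
  (J : {set 'I_n}) (B : 'M[R]_n) : Prop :=
  forall i j : 'I_n,
    if (i \in J) == (j \in J) then 0 < B i j else B i j < 0.

Definition SJS (R : numDomainType) (n : nat) (B : 'M[R]_n) : Prop :=
  exists J : {set 'I_n}, strictly_J_sign_symmetric J B.

Definition ESJS (R : numDomainType) (n : nat) (A : 'M[R]_n) : Prop :=
  exists k0 : nat, (0 < k0)%N /\ forall k : nat, (k0 <= k)%N -> SJS (A ^+ k).

Definition eventually_positive (R : numDomainType) (n : nat) (A : 'M[R]_n) : Prop :=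
  exists k0 : nat, (0 < k0)%N /\
    forall k : nat, (k0 <= k)%N -> forall i j : 'I_n, 0 < (A ^+ k) i j.

(* Main.v *)
Require Import Defs.
From mathcomp Require Import all_boot all_order all_algebra.
From mathcomp Require Import reals.
From mathcomp Require Import ring lra.
Import Order.TTheory GRing.Theory Num.Theory.
Set Implicit Arguments. Unset Strict Implicit.
Local Open Scope ring_scope.

Lemma sgn_aux (R : realDomainType) (a b c e : bool) (X Y : R) :
  0 < (if a then 1 else -1) * X * (if b then 1 else -1) ->
  0 < (if c then 1 else -1) * X * (if e then 1 else -1) ->
  0 < (if a then 1 else -1) * Y * (if b then 1 else -1) ->
  0 < (if c then 1 else -1) * Y * (if e then 1 else -1).
Proof.
by case: a; case: b; case: c; case: e;
    rewrite ?mul1r ?mulr1 ?mulN1r ?mulrN1 ?opprK => h1 h2 h3; lra.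
Qed.

Section H.
Variable R : realFieldType.
Variable n : nat.

Definition posm (P : 'M[R]_n) := forall i j, 0 < P i j.

Lemma pos_mul (P Q : 'M[R]_n) : posm P -> posm Q -> posm (P *m Q).
Proof.
move=> hP hQ i j; rewrite mxE (bigD1 i) //=.
apply: (@lt_le_trans _ _ (P i i * Q i j)); first exact: mulr_gt0.
rewrite lerDl; apply: sumr_ge0 => k _; apply: mulr_ge0; exact: ltW.
Qed.

Lemma pos_exp (P : 'M[R]_n) m : posm P -> (0 < m)%N -> posm (P ^+ m).
Proof.
move=> hP; elim: m => // [[|m]] IH _; first by rewrite expr1.
by rewrite exprS; apply: pos_mul => //; apply: IH.
Qed.

Lemma conj_exp (S T B : 'M[R]_n) m : S *m T = 1%:M -> T *m S = 1%:M ->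
  (S *m B *m T) ^+ m = S *m B ^+ m *m T.
Proof.
move=> hST hTS; elim: m => [|m IH]; first by rewrite !expr0 mulmx1 hST.
rewrite !exprS IH -!mulmxE.
have -> : S *m B *m T *m (S *m B ^+ m *m T) = S *m B *m (T *m S) *m B ^+ m *m T.
  by rewrite !mulmxA.
by rewrite hTS mulmx1 !mulmxA.
Qed.

Lemma conj_entry (d e : 'rV[R]_n) (B : 'M[R]_n) i j :
  (diag_mx d *m B *m diag_mx e) i j = d 0 i * B i j * e 0 j.
Proof. by rewrite mul_mx_diag mxE mul_diag_mx mxE. Qed.


Definition sgv (J : {set 'I_n}) : 'rV[R]_n := \row_i (if i \in J then 1 else -1).

Lemma sgv_sq J : diag_mx (sgv J) *m diag_mx (sgv J) = 1%:M.
Proof.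
rewrite mulmx_diag; apply/matrixP => i j; rewrite !mxE.
by case: (i \in J); rewrite ?mulr1 ?mulrNN ?mulr1.
Qed.

Lemma SJS_pos J (B : 'M[R]_n) : strictly_J_sign_symmetric J B ->
  posm (diag_mx (sgv J) *m B *m diag_mx (sgv J)).
Proof.
move=> h i j; rewrite conj_entry !mxE; have := h i j.
by case: (i \in J); case: (j \in J) => /= H; rewrite ?mul1r ?mulr1 ?mulN1r ?mulrN1 ?opprK ?oppr_gt0.
Qed.

Lemma SJS_exp J (B : 'M[R]_n) m : strictly_J_sign_symmetric J B -> (0 < m)%N ->
  posm (diag_mx (sgv J) *m B ^+ m *m diag_mx (sgv J)).
Proof.
move=> h hm; rewrite -(conj_exp B m (sgv_sq J) (sgv_sq J)). exact: (pos_exp (SJS_pos h) hm).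
Qed.

End H.

Theorem lemma2 (R : realType) (n : nat) (A : 'M[R]_n) :
  ESJS A <->
  exists (d : 'rV[R]_n) (At : 'M[R]_n),
    (forall i : 'I_n, d 0 i != 0) /\
    eventually_positive At /\
    A = diag_mx d *m At *m invmx (diag_mx d).
Proof.
split.
- move=> [k0 [hk0 hk]].
  have [J0 HJ0] := hk k0 (leqnn k0).
  set D := diag_mx (sgv R J0).
  have hDD : D *m D = 1%:M by apply: sgv_sq.
  have hinv : invmx D = D.
    have [uD _] := mulmx1_unit hDD.
    by rewrite -[invmx D]mulmx1 -hDD mulmxA mulVmx // mul1mx.
  exists (sgv R J0), (D *m A *m D); split.
    by move=> i; rewrite mxE; case: (i \in J0); rewrite ?oppr_eq0 oner_eq0.
  split; last by rewrite hinv !mulmxA hDD mul1mx -mulmxA hDD mulmx1.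
  exists k0; split => // k hk0k i j.
  have hk0' : (0 < k)%N by apply: leq_trans hk0k.
  have [Jk HJk] := hk k hk0k.
  have h1 := SJS_exp HJk hk0 i j.
  have h2 := SJS_exp HJ0 hk0' i j.
  have h3 := SJS_pos HJk i j.
  rewrite -exprM in h1; rewrite -exprM mulnC in h2.
  rewrite (conj_exp A k hDD hDD) conj_entry.
  rewrite !conj_entry !mxE in h1 h2 h3 *.
  move: h1 h2 h3.
  set X := (A ^+ (k * k0)) i j; set Y := (A ^+ k) i j.
  exact: sgn_aux.
- move=> [d [At [hd [[k0 [hk0 hk]] ->]]]].
  set e : 'rV[R]_n := \row_i (d 0 i)^-1.
  have hDE : diag_mx d *m diag_mx e = 1%:M.
    rewrite mulmx_diag; apply/matrixP => i j; rewrite !mxE divff //.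
  have hED : diag_mx e *m diag_mx d = 1%:M.
    rewrite mulmx_diag; apply/matrixP => i j; rewrite !mxE mulVf //.
  have hinv : invmx (diag_mx d) = diag_mx e.
    have [uD _] := mulmx1_unit hDE.
    by rewrite -[invmx _]mulmx1 -hDE mulmxA mulVmx // mul1mx.
  rewrite hinv.
  exists k0; split => // k hk0k.
  exists [set i | 0 < d 0 i] => i j.
  rewrite conj_exp // conj_entry !inE mxE.
  have := hk k hk0k i j; set P := (At ^+ k) i j => hP.
  have hi := hd i; have hj := hd j.
  have [di|di|di] := ltrgtP 0 (d 0 i); last by rewrite -di eqxx in hi.
  + have [dj|dj|dj] := ltrgtP 0 (d 0 j); last by rewrite -dj eqxx in hj.
    * by rewrite /= mulr_gt0 ?invr_gt0 // mulr_gt0.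
    * by rewrite /= pmulr_rlt0 ?invr_lt0 // mulr_gt0.
  + have [dj|dj|dj] := ltrgtP 0 (d 0 j); last by rewrite -dj eqxx in hj.
    * by rewrite /= pmulr_llt0 ?invr_gt0 // nmulr_rlt0.
    * by rewrite /= nmulr_rgt0 ?invr_lt0 // nmulr_rlt0.
Qed.
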